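(* Let $\delta\in(0,1]$, let $G$ be an $n$-vertex graph and let $V(G)=X_1\cup\dots\cup X_k$ be a partition such that each $X_i$ is a clique in $G$ and $(X_i,X_j)$ is induced $M_2$-free for every $1\le i<j\le k$. Then there is a $\delta$-homogeneous partition of $V(G)$ which refines $\{X_1,\dots,X_k\}$ and has at most $k(2/\delta)^k$ parts.
   Context: For disjoint $X,Y\subseteq V(G)$, an induced copy of $M_2$ in $(X,Y)$ is an unordered quadruple $x,x',y,y'$ with $x,x'\in X$, $y,y'\in Y$, $(x,y),(x',y')\in E(G)$ and $(x,y'),(x',y)\notin E(G)$; $(X,Y)$ is induced $M_2$-free if it contains no such copy. A pair $(A,B)$ of disjoint vertex sets is homogeneous if the bipartite graph of $G$ between $A$ and $B$ is complete or empty. A partition $\mathcal P$ of $V(G)$ of an $n$-vertex graph is $\delta$-homogeneous if the sum of $|U||V|$ over all unordered pairs of distinct parts $U,V\in\mathcal P$ such that $(U,V)$ is not homogeneous is at most $\delta n^2$. A partition $\mathcal P_2$ refines $\mathcal P_1$ if every part of $\mathcal P_2$ is contained in a part of $\mathcal P_1$. *)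

(* Defs.v *)
(* A graph G is a finite type T of vertices with a
   symmetric irreflexive boolean edge relation e. *)
From HB Require Import structures.
From mathcomp Require Import all_boot all_order all_algebra.
Set Implicit Arguments. Unset Strict Implicit. Unset Printing Implicit Defensive.
Import Order.TTheory GRing.Theory Num.Theory.

Section Defs.
Variable T : finType.
Variable e : rel T.

Definition simple_graph : Prop := symmetric e /\ irreflexive e.

Definition is_clique (X : {set T}) : Prop :=
  forall x y, x \in X -> y \in X -> x != y -> e x y.

Definition induced_M2_copy (X Y : {set T}) (x x' y y' : T) : Prop :=
  [/\ x \in X, x' \in X, y \in Y & y' \in Y] /\
  [/\ e x y, e x' y', ~~ e x y' & ~~ e x' y].

Definition induced_M2_free (X Y : {set T}) : Prop :=
  forall x x' y y', ~ induced_M2_copy X Y x x' y y'.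

Definition homogeneous (A B : {set T}) : bool :=
  [forall a in A, forall b in B, e a b] ||
  [forall a in A, forall b in B, ~~ e a b].

Definition vertex_partition (P : {set {set T}}) : bool := partition P [set: T].

(* sum of |U||V| over ORDERED pairs (U,V) of distinct parts that are not
   homogeneous; this is twice the sum over unordered pairs *)
Definition nonhom_ordered_sum (P : {set {set T}}) : nat :=
  \sum_(U in P) \sum_(V in P | (U != V) && ~~ homogeneous U V) #|U| * #|V|.

Definition delta_homogeneous (R : realFieldType) (delta : R)
    (P : {set {set T}}) : Prop :=
  vertex_partition P /\
  ((nonhom_ordered_sum P)%:R / 2 <= delta * (#|T|%:R) ^+ 2)%R.

Definition refines (k : nat) (P : {set {set T}}) (X : 'I_k -> {set T}) : Prop :=
  forall U, U \in P -> exists i, U \subset X i.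
End Defs.

(* Main.v *)
Require Import Defs.
From HB Require Import structures.
From mathcomp Require Import all_boot all_order all_algebra.
From mathcomp Require Import zify ring lra.
Import Order.TTheory GRing.Theory Num.Theory.

Lemma sum_blocks (T : finType) (P : {set {set T}}) (F : {set T} -> nat) :
  partition P [set: T] -> \sum_(V in P) #|V| * F V = \sum_v F (pblock P v).
Proof.
case/and3P => /eqP cov tI _.
have -> : \sum_v F (pblock P v) = \sum_(v in cover P) F (pblock P v).
  by apply: eq_bigl => v; rewrite cov inE.
rewrite big_trivIset //; apply: eq_bigr => A PA.
rewrite -sum_nat_const; apply: eq_bigr => x Ax.
by rewrite (def_pblock tI PA Ax).
Qed.

Lemma card_div_bucket (T : finType) (A : {set T}) (f : T -> nat) (b s : nat) :
  (0 < b)%N -> {in A &, injective f} -> (#|[set v in A | f v %/ b == s]| <= b)%N.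
Proof.
move=> b0 finj.
pose g v := Ordinal (ltn_pmod (f v) b0).
set S := [set _ in _ | _].
rewrite -(card_in_imset (f := g)); first by rewrite -[X in (_ <= X)%N]card_ord max_card.
move=> v w; rewrite !inE => /andP[vA /eqP fv] /andP[wA /eqP fw] /(congr1 val) /= gvw.
apply: finj => //; rewrite (divn_eq (f v) b) (divn_eq (f w) b) fv fw gvw //.
Qed.

Lemma sum_bool_card (T : finType) (P Q : pred T) :
  \sum_(v | P v) (Q v : nat) = #|[set v | P v && Q v]|.
Proof.
rewrite -sum1_card.
transitivity (\sum_(v | P v && Q v) 1); last by apply: eq_bigl => v; rewrite inE.
rewrite big_mkcondr; apply: eq_bigr => v _; by case: (Q v).
Qed.

Lemma hom_sym (T : finType) (e : rel T) (A B : {set T}) :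
  symmetric e -> homogeneous e A B = homogeneous e B A.
Proof.
move=> es; rewrite /homogeneous.
have H : forall (A B : {set T}) (p : bool -> bool),
  [forall a in A, forall b in B, p (e a b)] -> [forall b in B, forall a in A, p (e b a)].
  move=> A' B' p /forall_inP H; apply/forall_inP => b Bb; apply/forall_inP => a Aa.
  by rewrite es; exact: (forall_inP (H a Aa) b Bb).
apply/idP/idP => /orP[] h; apply/orP; [left|right|left|right];
  by [apply: (H _ _ id) | apply: (H _ _ negb)].
Qed.

Lemma lex_trans (a b c ra rb rc : nat) :
  (b < a) || ((a == b) && (ra < rb)) -> (c < b) || ((b == c) && (rb < rc)) ->
  (c < a) || ((a == c) && (ra < rc)).
Proof.
case/orP => [h1|/andP[/eqP h1 h2]]; case/orP => [h3|/andP[/eqP h3 h4]];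
  apply/orP; [left|left|left|right]; try lia.
Qed.

Local Open Scope ring_scope.

Theorem lemma2p3 (R : realFieldType) (delta : R) (T : finType) (e : rel T)
  (k : nat) (X : 'I_k -> {set T}) :
  0 < delta -> delta <= 1 ->
  simple_graph e ->
  (forall i, X i != set0) ->
  (forall i j, i != j -> [disjoint X i & X j]) ->
  (forall v : T, exists i, v \in X i) ->
  (forall i, is_clique e (X i)) ->
  (forall i j : 'I_k, (i < j)%N -> induced_M2_free e (X i) (X j)) ->
  exists P : {set {set T}},
    [/\ delta_homogeneous e delta P, refines P X &
        (#|P|%:R : R) <= k%:R * (2 / delta) ^+ k].
Proof.
move=> dpos dle1 [es eirr] Xne Xdis Xcov Xcl XM2.
have cf : forall v, {i | v \in X i} := fun v => sigW (Xcov v).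
pose c v := sval (cf v).
have cP v : v \in X (c v) := svalP (cf v).
have cX v j : (v \in X j) = (c v == j).
  apply/idP/eqP => [vj|<-]; last exact: cP.
  case: (eqVneq (c v) j) => // /Xdis /disjointFr /(_ (cP v)).
  by rewrite vj.
pose N j := #|X j|.
have Npos j : (0 < N j)%N by rewrite card_gt0.
pose deg (A : {set T}) v := #|[set w in A | e v w]|.
have degle j v : (deg (X j) v <= N j)%N.
  by apply: subset_leq_card; apply/subsetP => w; rewrite inE => /andP[].
pose tm j := (\max_(t < (N j).+1 | ((t%:R : R) < delta * (N j)%:R)%R) t)%N.
pose bw j := (tm j).+1.
pose before i w v := (deg (X i) v < deg (X i) w)%N ||
   ((deg (X i) w == deg (X i) v) && (enum_rank w < enum_rank v)%N).
pose rk i v := #|[set w in X (c v) | before i w v]|.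
have rkle i v : (rk i v <= N (c v))%N.
  by apply: subset_leq_card; apply/subsetP => w; rewrite inE => /andP[].
have ch (i j : 'I_k) (x v w : T) : (i < j)%N -> x \in X i -> v \in X j -> w \in X j -> e x v ->
    (deg (X i) v <= deg (X i) w)%N -> e x w.
  move=> ij xi vj wj exv dvw; apply/negP => nxw.
  have : ~~ ([set z in X i | e w z] \subset [set z in X i | e v z]).
    apply/negP => sub.
    have : (deg (X i) w < deg (X i) v)%N.
      apply: proper_card; apply/properP; split => //; exists x.
        by rewrite inE xi es.
      by rewrite inE xi /= es; apply/negP.
    by rewrite ltnNge dvw.
  case/subsetPn => x'; rewrite !inE => /andP[x'i ewx'].
  rewrite x'i /= => nevx'.
  apply: (XM2 i j ij x x' v w); split; first by split.
  split => //; [by rewrite es | by apply/negP | by rewrite es].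
have thr (i j : 'I_k) (x v : T) : (i < j)%N -> x \in X i -> v \in X j ->
    e x v = (rk i v < deg (X j) x)%N.
  move=> ij xi vj.
  have cvj : c v = j by apply/eqP; rewrite -cX.
  rewrite /rk cvj.
  case exv: (e x v); apply/esym.
    apply: proper_card; apply/properP; split.
      apply/subsetP => w; rewrite !inE => /andP[wj bwv]; rewrite wj /=.
      apply: (ch i j x v w) => //.
      by case/orP: bwv => [/ltnW //|/andP[/eqP -> _]].
    by exists v; rewrite !inE ?vj ?exv // /before ltnn eqxx ltnn.
  apply/negbTE; rewrite -leqNgt; apply: subset_leq_card.
  apply/subsetP => w; rewrite !inE => /andP[wj exw]; rewrite wj /=.
  apply/orP; left; rewrite ltnNge; apply/negP => dwv.
  by move: (ch i j x w v ij xi wj vj exw dwv); rewrite exv.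

have beftot (i : 'I_k) (w v : T) : w != v -> before i w v || before i v w.
  move=> wv; rewrite /before.
  have : (enum_rank w : nat) != enum_rank v.
    by apply: contra wv => /eqP /val_inj /enum_rank_inj ->.
  move: (deg (X i) w) (deg (X i) v) (enum_rank w : nat) (enum_rank v : nat) => a b ra rb.
  move=> H; lia.
have beftr (i : 'I_k) (z w v : T) : before i z w -> before i w v -> before i z v.
  rewrite /before => h1 h2.
  exact: (lex_trans _ _ _ _ _ _ h1 h2).
have befirr (i : 'I_k) (v : T) : before i v v = false by rewrite /before ltnn ltnn andbF.
have rkinj (i j : 'I_k) : (i < j)%N -> {in X j &, injective (rk i)}.
  move=> ij v w vj wj rvw; apply/eqP; apply/negPn/negP => vw.
  have cv : c v = j by apply/eqP; rewrite -cX.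
  have cw : c w = j by apply/eqP; rewrite -cX.
  have lt2 : forall v w, v \in X j -> w \in X j -> before i w v -> (rk i w < rk i v)%N.
    move=> v' w' v'j w'j bwv; rewrite /rk.
    have -> : c v' = j by apply/eqP; rewrite -cX.
    have -> : c w' = j by apply/eqP; rewrite -cX.
    apply: proper_card; apply/properP; split.
      apply/subsetP => z; rewrite !inE => /andP[-> bzw] /=; exact: beftr bzw bwv.
    by exists w'; rewrite !inE ?w'j ?bwv ?befirr.
  have wv : w != v by rewrite eq_sym.
  case/orP: (beftot i w v wv) => h.
    by have := lt2 v w vj wj h; rewrite rvw ltnn.
  by have := lt2 w v wj vj h; rewrite rvw ltnn.

have NposR j : (0 : R) < (N j)%:R by rewrite ltr0n.
have tm_lt j : ((tm j)%:R : R) < delta * (N j)%:R.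
  rewrite /tm; apply: (big_ind (fun t : nat => (t%:R : R) < delta * (N j)%:R)) => //.
  - by rewrite mulr_gt0.
  - by move=> x y hx hy; rewrite /maxn; case: ifP.
have bw_ge j : delta * (N j)%:R <= (bw j)%:R.
  have tmax : forall t' : 'I_(N j).+1, (t'%:R : R) < delta * (N j)%:R -> (t' <= tm j)%N.
    by move=> t' h; apply: (leq_bigmax_cond t' h).
  case: (ltnP (tm j) (N j)) => h.
    rewrite leNgt; apply/negP => h2.
    have := tmax (Ordinal (h : (tm j).+1 < (N j).+1)%N) h2.
    by rewrite /= ltnn.
  have h1 : ((N j)%:R : R) <= (bw j)%:R by rewrite ler_nat /bw; lia.
  have h3 : delta * (N j)%:R <= (N j)%:R.
    by rewrite -[X in _ <= X]mul1r ler_wpM2r // ler0n.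
  exact: le_trans h3 h1.
have bw2 j : (2 <= bw j)%N -> ((bw j)%:R : R) <= 2 * delta * (N j)%:R.
  move=> h; have h5 := tm_lt j.
  have h4 : (1 : R) <= (tm j)%:R by rewrite ler1n; rewrite /bw in h; lia.
  have -> : bw j = (tm j + 1)%N by rewrite addn1.
  rewrite natrD; lra.
have qle j : ((N j %/ bw j)%N%:R : R) <= 1 / delta.
  rewrite ler_pdivlMr //.
  have h1 : ((N j %/ bw j * bw j)%N%:R : R) <= (N j)%:R by rewrite ler_nat leq_divM.
  have h2 : ((N j %/ bw j)%N%:R : R) * (delta * (N j)%:R) <= (N j)%:R.
    apply: le_trans h1; rewrite natrM ler_wpM2l ?ler0n //.
  rewrite -(ler_pM2r (NposR j)); by rewrite mul1r -mulrA.

pose lab v (j : 'I_k) := if (c v < j)%N then (deg (X j) v %/ bw j)%N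
   else if (j < c v)%N then (rk j v %/ bw (c v))%N else 0%N.
pose mx := (\max_(j < k) (N j %/ bw j))%N.
have lable v j : (lab v j <= mx)%N.
  rewrite /lab; case: ifP => _.
    apply: leq_trans (leq_bigmax j); apply: leq_div2r; exact: degle.
  case: ifP => _ //.
  apply: leq_trans (leq_bigmax (c v)); apply: leq_div2r; exact: rkle.
pose key v := (c v, [ffun j => (inord (lab v j) : 'I_mx.+1)]).
have keyE v w : key v = key w -> c v = c w /\ forall j, lab v j = lab w j.
  move=> h; split; first by move: (congr1 fst h).
  move=> j; move: (congr1 snd h) => /= /ffunP /(_ j); rewrite !ffunE.
  by move=> /(congr1 val); rewrite /= !inordK // ltnS.
pose P := preim_partition key [set: T].
have Ppart : partition P [set: T] by apply: preim_partitionP.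
pose cls v := [set y in [set: T] | key v == key y].
have PE : P = [set cls x | x in [set: T]] by [].
have Pref : refines P X.
  move=> U; rewrite PE => /imsetP[x _ ->]; exists (c x).
  apply/subsetP => y; rewrite inE => /andP[_ /eqP /keyE [-> _]]; exact: cP.
have Pcard : (#|P| <= k * mx.+1 ^ k)%N.
  have -> : P = (fun z => [set y in [set: T] | z == key y]) @: (key @: [set: T]).
    by rewrite PE -imset_comp.
  apply: leq_trans (leq_imset_card _ _) _.
  apply: leq_trans (max_card _) _.
  by rewrite card_prod card_ffun !card_ord.

have [_ tI _] := and3P Ppart.
have clsP v : cls v \in P by rewrite PE; apply: imset_f; rewrite inE.
have pbE u : pblock P u = cls u.
  by apply: (def_pblock tI (clsP u)); rewrite /cls inE; apply/andP; split; [exact: in_setT | exact: eqxx].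
have inclsE u a : a \in cls u -> c a = c u /\ forall j, lab a j = lab u j.
  rewrite /cls inE => /andP[_ /eqP h]; have [h1 h2] := keyE _ _ h.
  by split; [rewrite h1 | move=> j; rewrite h2].
pose C u v := (cls u != cls v) && ~~ homogeneous e (cls u) (cls v).
have Csym u v : C u v = C v u by rewrite /C eq_sym hom_sym.
have Cne u v : C u v -> c u != c v.
  move=> /andP[neq nh]; apply/negP => /eqP cuv; move: nh; apply/negP; rewrite negbK.
  apply/orP; left; apply/forall_inP => a au; apply/forall_inP => b bv.
  have [ca _] := inclsE _ _ au; have [cb _] := inclsE _ _ bv.
  apply: (Xcl (c u)); first by rewrite -ca cP.
    by rewrite cuv -cb cP.
  apply: contra neq => /eqP ab; subst b.
  move: au bv; rewrite !inE => /andP[_ /eqP h1] /andP[_ /eqP h2].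
  by apply/eqP/setP => y; rewrite !inE h1 h2.

have labi u (j : 'I_k) : (c u < j)%N -> lab u j = (deg (X j) u %/ bw j)%N.
  by move=> h; rewrite /lab h.
have labj v (i : 'I_k) : (i < c v)%N -> lab v i = (rk i v %/ bw (c v))%N.
  by move=> h; rewrite /lab ltnNge (ltnW h) /= h.
have Ckey u v (j : 'I_k) : (c u < j)%N -> c v == j -> C u v ->
    (bw j != 1%N) && (rk (c u) v %/ bw j == deg (X j) u %/ bw j)%N.
  move=> uj /eqP cvj /andP[_]; rewrite /homogeneous negb_or.
  case/andP=> /forall_inPn [a au /forall_inPn [b bv nab]]
              /forall_inPn [a' a'u /forall_inPn [b' b'v]]; rewrite negbK => eab.
  have [ca la] := inclsE _ _ au; have [ca' la'] := inclsE _ _ a'u.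
  have [cb lb] := inclsE _ _ bv; have [cb' lb'] := inclsE _ _ b'v.
  have ai : a \in X (c u) by rewrite -ca cP.
  have a'i : a' \in X (c u) by rewrite -ca' cP.
  have bj : b \in X j by rewrite -cvj -cb cP.
  have b'j : b' \in X j by rewrite -cvj -cb' cP.
  have uj' : (c u < c v)%N by rewrite cvj.
  have E1 : (deg (X j) a %/ bw j = deg (X j) u %/ bw j)%N.
    by have := la j; rewrite (labi a j) ?ca // (labi u j).
  have E2 : (deg (X j) a' %/ bw j = deg (X j) u %/ bw j)%N.
    by have := la' j; rewrite (labi a' j) ?ca' // (labi u j).
  have E3 : (rk (c u) b %/ bw j = rk (c u) v %/ bw j)%N.
    by have := lb (c u); rewrite (labj b (c u)) ?cb // (labj v (c u)) // cvj.
  have E4 : (rk (c u) b' %/ bw j = rk (c u) v %/ bw j)%N.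
    by have := lb' (c u); rewrite (labj b' (c u)) ?cb' // (labj v (c u)) // cvj.
  have h1 := thr _ _ a b uj ai bj; rewrite (negbTE nab) in h1.
  have h2 := thr _ _ a' b' uj a'i b'j; rewrite eab in h2.
  have h1' : (deg (X j) a <= rk (c u) b)%N by rewrite leqNgt -h1.
  have h2' : (rk (c u) b' <= deg (X j) a')%N by apply: ltnW; rewrite -h2.
  have s1 := leq_div2r (bw j) h1'; have s2 := leq_div2r (bw j) h2'.
  rewrite E1 E3 in s1; rewrite E2 E4 in s2.
  apply/andP; split; last by rewrite eqn_leq s1 s2.
  apply/eqP => b1; rewrite b1 !divn1 in E1 E2 E3 E4.
  move: h1 h2; rewrite E1 E2 E3 E4 => h1 h2.
  by rewrite -h1 in h2.

have Cmain u (j : 'I_k) : (c u < j)%N ->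
    (#|[set v | (c v == j) && C u v]|%:R : R) <= 2 * delta * (N j)%:R.
  move=> uj; case: (eqVneq (bw j) 1%N) => b1.
    have -> : [set v | (c v == j) && C u v] = set0.
      apply/setP => v; rewrite !inE; apply/negP => /andP[h1 h2].
      by move: (Ckey u v j uj h1 h2); rewrite b1.
    by rewrite cards0 !mulr_ge0 ?ler0n // ltW.
  have bj2 : (2 <= bw j)%N by move: b1; rewrite /bw; lia.
  apply: le_trans (bw2 j bj2); rewrite ler_nat.
  apply: leq_trans (@card_div_bucket T (X j) (rk (c u)) (bw j) (deg (X j) u %/ bw j)%N (ltn0Sn _) (rkinj (c u) j uj)).
  apply: subset_leq_card; apply/subsetP => v; rewrite !inE => /andP[h1 h2].
  by have /andP[_ ->] := Ckey u v j uj h1 h2; rewrite cX h1.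

have Ssum : nonhom_ordered_sum e P = (\sum_u \sum_v (C u v : nat))%N.
  rewrite /nonhom_ordered_sum.
  under eq_bigr => U _ do rewrite -big_distrr /=.
  rewrite (@sum_blocks T P (fun U => \sum_(V in P | (U != V) && ~~ homogeneous e U V) #|V|)%N Ppart).
  apply: eq_bigr => u _; rewrite big_mkcondr /=.
  transitivity (\sum_(V in P) #|V| * ((pblock P u != V) && ~~ homogeneous e (pblock P u) V))%N.
    by apply: eq_bigr => V _; case: ifP; rewrite ?muln1 ?muln0.
  rewrite (@sum_blocks T P (fun V => ((pblock P u != V) && ~~ homogeneous e (pblock P u) V) : nat) Ppart).
  by apply: eq_bigr => v _; rewrite !pbE.
pose S1 := (\sum_u \sum_v ((C u v && (c u < c v)%N) : nat))%N.
pose Q := (\sum_u \sum_v ((c u < c v)%N : nat))%N.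
have S2 : (\sum_u \sum_v (C u v : nat))%N = (S1 + S1)%N.
  have pt u v : (C u v : nat) = ((C u v && (c u < c v)%N) : nat) + ((C v u && (c v < c u)%N) : nat).
    rewrite (Csym v u); case H: (C u v) => //=.
    have := Cne _ _ H; case: (ltngtP (c u) (c v)) => // /val_inj ->.
    by rewrite eqxx.
  under eq_bigr => u _ do under eq_bigr => v _ do rewrite pt.
  under eq_bigr => u _ do rewrite big_split /=.
  rewrite big_split /=; congr (_ + _).
  by rewrite exchange_big.
have Q2 : (Q + Q <= #|T| * #|T|)%N.
  have -> : (Q + Q = \sum_u \sum_v (((c u < c v)%N : nat) + ((c v < c u)%N : nat)))%N.
    rewrite [X in (_ + X)%N]exchange_big /= -big_split /=.
    by apply: eq_bigr => u _; rewrite big_split.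
  have c1 : (\sum_(v : T) 1 = #|T|)%N by rewrite -sum1_card.
  rewrite -{1}c1 big_distrl /=; apply: leq_sum => u _.
  rewrite mul1n -c1; apply: leq_sum => v _.
  by case: (ltngtP (c u) (c v)).
have S1le : (S1%:R : R) <= 2 * delta * Q%:R.
  rewrite /S1 /Q !natr_sum mulr_sumr; apply: ler_sum => u _.
  rewrite (partition_big c xpredT) // (partition_big c xpredT (F := fun v => ((c u < c v)%N : nat))) //.
  rewrite !natr_sum mulr_sumr; apply: ler_sum => j _.
  rewrite !sum_bool_card.
  case: (ltnP (c u) j) => uj.
    have -> : #|[set v | xpredT v && (c v == j) && (c u < c v)%N]| = N j.
      apply: eq_card => v; rewrite !inE /= cX.
      by case: eqP => //= ->; rewrite uj.
    apply: le_trans (Cmain u j uj); rewrite ler_nat; apply: subset_leq_card.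
    by apply/subsetP => v; rewrite !inE /= => /andP[-> /andP[]].
  rewrite [X in X%:R <= _](_ : _ = 0%N); last first.
    apply/eqP; rewrite cards_eq0; apply/eqP/setP => v; rewrite !inE /=.
    by case: eqP => //= ->; rewrite ltnNge uj !andbF.
  by rewrite !mulr_ge0 ?ler0n // ltW.
exists P; split => //.
  split => //; rewrite Ssum S2.
  have -> : ((S1 + S1)%N%:R : R) / 2 = S1%:R by rewrite natrD; field.
  apply: le_trans S1le _.
  have h : ((Q + Q)%N%:R : R) <= (#|T| * #|T|)%N%:R by rewrite ler_nat.
  rewrite natrD natrM in h; rewrite expr2.
  have hQ : (0 : R) <= Q%:R by rewrite ler0n.
  nra.
have mxle : (mx%:R : R) <= 1 / delta.
  rewrite /mx; apply: (big_ind (fun t : nat => (t%:R : R) <= 1 / delta)) => //.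
  - by rewrite divr_ge0 // ltW.
  - by move=> x y hx hy; rewrite /maxn; case: ifP.
have one : (1 : R) <= 1 / delta by rewrite ler_pdivlMr // mul1r.
have mx1 : ((mx.+1)%:R : R) <= 2 / delta.
  rewrite -addn1 natrD.
  have -> : (2 : R) / delta = 1 / delta + 1 / delta by rewrite -mulrDl.
  lra.
apply: le_trans (_ : ((k * mx.+1 ^ k)%N%:R : R) <= _); first by rewrite ler_nat.
rewrite natrM natrX; apply: ler_wpM2l; first exact: ler0n.
by apply: lerXn2r => //; rewrite qualifE /= ?ler0n // divr_ge0 // ltW.
Qed.
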